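(* Let $(X,Y,R)$ be a random triple with $X\in\mathbb{R}^d$, $Y\in\{0,1\}$, $R\in\{0,1\}$, $P(Y=y,R=r)>0$ for all $y,r$, and with strictly positive conditional Lebesgue densities $p(x\mid Y=y,R=r)$. Suppose the exponential tilt model with $T(x)=x$ holds: there exist $\alpha_0^\star,\alpha_1^\star\in\mathbb{R}$, $\beta_0^\star,\beta_1^\star\in\mathbb{R}^d$ such that for all $x,y$, $$p(x\mid Y=y,R=0)P(Y=y\mid R=0)=\exp(\alpha_y^\star+{\beta_y^\star}^\top x)\,p(x\mid Y=y,R=1)P(Y=y\mid R=1).$$ Let $B=(\beta_0^\star,\beta_1^\star)\in\mathbb{R}^{d\times 2}$, $U=B^\top X$, and $V=(\mathbf{I}-\mathbf{P}_B)X$, where $\mathbf{P}_B$ is the orthogonal projection onto the column space of $B$. Then $V\perp R\mid (Y,U)$, and hence $X\perp R\mid (Y,U)$.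
   Context: $\perp$ denotes conditional independence. *)

(* Defs.v *)
From HB Require Import structures.
From mathcomp Require Import all_boot all_order all_algebra.
From mathcomp Require Import all_classical all_reals all_analysis.
Set Implicit Arguments.
Unset Strict Implicit.
Unset Printing Implicit Defensive.
Import Order.TTheory GRing.Theory Num.Theory.
Local Open Scope classical_set_scope.
Local Open Scope ring_scope.

(* R^d is represented by [d.-tuple R], with its product (Borel) sigma-algebra
   generated by the coordinate projections (library instance). *)

(* Lebesgue measure on R^d, characterised by its values on closed boxes
   (this determines it uniquely on the Borel sets). *)
Definition is_lebesgue_measure_Rd {R : realType} (d : nat)
  (lam : {measure set (d.-tuple R) -> \bar R}) : Prop :=
  forall a b : 'I_d -> R, (forall i, a i <= b i) ->
    lam [set x | forall i, a i <= tnth x i <= b i] = (\prod_(i < d) (b i - a i))%:E.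

(* g : TW -> R is a version of the conditional probability P(E | W),
   i.e. of E[1_E | sigma(W)] written as a function of W. *)
Definition cond_prob_version {R : realType} {dO} {Om : measurableType dO}
  (P : probability Om R) {dW} {TW : measurableType dW}
  (W : Om -> TW) (E : set Om) (g : TW -> R) : Prop :=
  measurable_fun setT g /\ (forall w, 0 <= g w <= 1) /\
  forall D : set TW, measurable D ->
    (\int[P]_(om in W @^-1` D) (g (W om))%:E = P (E `&` W @^-1` D))%E.

Definition cond_indep {R : realType} {dO} {Om : measurableType dO}
  (P : probability Om R) {dV dS dW} {TV : measurableType dV}
  {TS : measurableType dS} {TW : measurableType dW}
  (V : Om -> TV) (S : Om -> TS) (W : Om -> TW) : Prop :=
  forall (A : set TV) (B : set TS), measurable A -> measurable B ->
  exists gA gB gAB : TW -> R,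
    [/\ cond_prob_version P W (V @^-1` A) gA,
        cond_prob_version P W (S @^-1` B) gB,
        cond_prob_version P W (V @^-1` A `&` S @^-1` B) gAB &
        {ae P, forall om, gAB (W om) = gA (W om) * gB (W om)}].

Definition tcol {R : realType} {d : nat} (x : d.-tuple R) : 'cV[R]_d :=
  \col_i tnth x i.
Definition coltup {R : realType} {d : nat} (v : 'cV[R]_d) : d.-tuple R :=
  [tuple v i 0 | i < d].

Definition condP {R : realType} {dO} {Om : measurableType dO}
  (P : probability Om R) (A B : set Om) : R :=
  fine (P (A `&` B)) / fine (P B).

Definition is_orth_proj_colspace {R : realType} {d m : nat}
  (PB : 'M[R]_d) (B : 'M[R]_(d, m)) : Prop :=
  [/\ PB^T = PB, PB *m PB = PB & (PB^T == B^T)%MS].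

(* Main.v *)
Require Import Defs.
From HB Require Import structures.
From mathcomp Require Import all_boot all_order all_algebra.
From mathcomp Require Import all_classical all_reals all_analysis.
From mathcomp Require Import measurable_realfun.
From mathcomp.algebra_tactics Require Import ring lra.
Import Order.TTheory GRing.Theory Num.Theory.
Local Open Scope classical_set_scope.
Local Open Scope ring_scope.



Section dens.
Context d (T : measurableType d) (R : realType).
Variables (mu nu : {measure set T -> \bar R}) (q : T -> R).
Hypothesis mq : measurable_fun setT q.
Hypothesis q0 : forall x, 0 <= q x.
Hypothesis nuq : forall A, measurable A -> nu A = (\int[mu]_(x in A) (q x)%:E)%E.
Local Open Scope ereal_scope.
Import HBNNSimple.

Lemma dens_int (f : T -> \bar R) (E : set T) : (forall x, 0 <= f x) ->
    measurable E -> measurable_fun E f ->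
  \int[nu]_(x in E) f x = \int[mu]_(x in E) (f x * (q x)%:E).
Proof.
move=> f0 mE mf; set g := EFin \o q.
have mg : measurable_fun setT g by exact/measurable_EFinP.
have g0 x : 0 <= g x by rewrite /g /= lee_fin.
pose h := nnsfun_approx mE mf.
have -> : \int[nu]_(x in E) f x =
    lim (\int[nu]_(x in E) (EFin \o h n) x @[n --> \oo]).
  have fE x : E x -> f x = lim ((EFin \o h n) x @[n --> \oo]).
    by move=> Ex; apply/esym/cvg_lim => //; exact: cvg_nnsfun_approx.
  under eq_integral => x /[!inE] /fE -> //.
  apply: monotone_convergence => //.
  - move=> n; apply/measurable_EFinP.
    by apply: (measurable_funS measurableT) => //; exact/measurable_funP.
  - by move=> n x Ex //=; rewrite lee_fin.
  - by move=> x Ex a b ab; rewrite lee_fin; exact/lefP/nd_nnsfun_approx.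
have -> : \int[mu]_(x in E) (f x * g x) =
    lim (\int[mu]_(x in E) ((EFin \o h n) \* g) x @[n --> \oo]).
  have fg x : E x -> f x * g x = lim (((EFin \o h n) \* g) x @[n --> \oo]).
    by move=> Ex; apply/esym/cvg_lim => //; apply: cvgeZr;
      [by []|exact: cvg_nnsfun_approx].
  under eq_integral => x /[!inE] /fg -> //.
  apply: monotone_convergence => [//| | |].
  - move=> n; apply/emeasurable_funM; apply/measurable_funTS.
      exact/measurable_EFinP.
    exact: mg.
  - by move=> n x Ex /=; rewrite mule_ge0 ?lee_fin.
  - by move=> x Ex a b ab/=; rewrite lee_wpmul2r ?lee_fin//; exact/lefP/nd_nnsfun_approx.
apply/esym. suff suf n : \int[mu]_(x in E) ((EFin \o h n) \* g) x =
    \int[nu]_(x in E) (EFin \o h n) x.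
  by under eq_fun do rewrite suf.
transitivity (\int[nu]_(x in E)
   (\sum_(y \in range (h n)) (y * \1_(h n @^-1` [set y]) x)%:E)); last first.
  by apply: eq_integral => t tE; rewrite /= fimfunE -fsumEFin.
have indich m r : measurable_fun E (fun x => (r * \1_(h m @^-1` [set r]) x)%:E).
  by apply: (measurable_comp measurableT) => //; exact: measurable_funM.
rewrite ge0_integral_fsum//; last by move=> m y Ey; exact: nnfun_muleindic_ge0.
transitivity (\int[mu]_(x in E) (\sum_(y \in range (h n))
    (y * \1_(h n @^-1` [set y]) x)%:E * g x)).
  under [RHS]eq_integral => x xE.
    rewrite -ge0_mule_fsuml => [|y]; last exact: nnfun_muleindic_ge0.
    rewrite fsumEFin // -(fimfunE _ x); over.
  by [].
rewrite ge0_integral_fsum//; last 2 first.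
  - move=> y; apply: emeasurable_funM => //; apply: measurable_funTS.
    exact: mg.
  - by move=> m y Ey; rewrite mule_ge0 ?nnfun_muleindic_ge0.
apply: eq_fsbigr => r rhn.
under [RHS]eq_integral do rewrite EFinM.
rewrite integralZl_indic_nnsfun => //.
under eq_integral do rewrite EFinM -muleA.
rewrite ge0_integralZl//.
- under eq_integral do rewrite muleC.
  rewrite (eq_integral (g \_ (h n @^-1` [set r]))); last first.
    by move=> x xE; rewrite epatch_indic.
  rewrite -integral_mkcondr integral_indic // nuq ?(setIC E) //; exact: measurableI.
- apply: emeasurable_funM; first exact/measurable_EFinP.
  exact/measurable_funTS/mg.
- by move=> t Et; rewrite mule_ge0 ?lee_fin.
- by move: rhn; rewrite inE => -[t _ <-]; rewrite lee_fin.
Qed.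
End dens.


Section restr.
Context d (T : measurableType d) (R : realType).
Variables (P : {measure set T -> \bar R}) (E : set T) (mE : measurable E).
Local Open Scope ereal_scope.

Lemma int_restr (f : T -> \bar R) (S : set T) : (forall x, 0 <= f x) ->
  measurable S -> measurable_fun S f ->
  \int[mrestr P mE]_(x in S) f x = \int[P]_(x in S `&` E) f x.
Proof.
move=> f0 mS mf.
rewrite (@dens_int _ _ _ P (mrestr P mE) (\1_E)) //.
- rewrite integral_mkcond [RHS]integral_mkcond; apply: eq_integral => x _.
  rewrite /patch indicE in_setI.
  by case: (x \in S); case: (x \in E); rewrite /= ?mule1 ?mule0.
by move=> A mA; rewrite integral_indic // /mrestr setIC.
Qed.
End restr.


Section rnv.
Context (R : realType) dO (Om : measurableType dO) (P : probability Om R)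
  dW (TW : measurableType dW) (W : Om -> TW) (mW : measurable_fun setT W)
  (E : set Om) (mE : measurable E).
Local Open Scope ereal_scope.

Lemma mWp (D : set TW) : measurable D -> measurable (W @^-1` D).
Proof. by move=> mD; rewrite -[_ @^-1` _]setTI; exact: mW. Qed.

Definition nuE (D : set TW) : \bar R := P (E `&` W @^-1` D).

Let nuE0 : nuE set0 = 0.
Proof. by rewrite /nuE preimage_set0 setI0 measure0. Qed.

Let nuE_ge0 A : 0 <= nuE A.
Proof. exact: measure_ge0. Qed.

Let nuE_sa : semi_sigma_additive nuE.
Proof.
move=> F mF tF mUF; rewrite /nuE preimage_bigcup setI_bigcupr.
apply: measure_semi_sigma_additive.
- by move=> n; apply: measurableI => //; exact: mWp.
- apply/trivIsetP => /= i j _ _ ij; rewrite setIACA setIid -preimage_setI.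
  by move/trivIsetP : tF => /(_ _ _ _ _ ij) ->//; rewrite preimage_set0 setI0.
- rewrite -setI_bigcupr -preimage_bigcup; apply: measurableI => //; exact: mWp.
Qed.

HB.instance Definition _ := isMeasure.Build _ _ _ nuE nuE0 nuE_ge0 nuE_sa.

Let nuE_fin : fin_num_fun nuE.
Proof.
move=> U mU; rewrite /nuE ge0_fin_numE ?measure_ge0//.
by rewrite (le_lt_trans (probability_le1 _ _)) ?ltry//; apply: measurableI => //; exact: mWp.
Qed.

HB.instance Definition _ := Measure_isFinite.Build _ _ _ nuE nuE_fin.

Definition muW (D : set TW) : \bar R := P (W @^-1` D).

Let muW0 : muW set0 = 0.
Proof. by rewrite /muW preimage_set0 measure0. Qed.

Let muW_ge0 A : 0 <= muW A.
Proof. exact: measure_ge0. Qed.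

Let muW_sa : semi_sigma_additive muW.
Proof.
move=> F mF tF mUF; rewrite /muW preimage_bigcup.
apply: measure_semi_sigma_additive.
- by move=> n; exact: mWp.
- apply/trivIsetP => /= i j _ _ ij; rewrite -preimage_setI.
  by move/trivIsetP : tF => /(_ _ _ _ _ ij) ->//; rewrite preimage_set0.
- rewrite -preimage_bigcup; exact: mWp.
Qed.

HB.instance Definition _ := isMeasure.Build _ _ _ muW muW0 muW_ge0 muW_sa.

Let muW_fin : fin_num_fun muW.
Proof.
move=> U mU; rewrite /muW ge0_fin_numE ?measure_ge0//.
by rewrite (le_lt_trans (probability_le1 _ _)) ?ltry//; exact: mWp.
Qed.

HB.instance Definition _ := Measure_isFinite.Build _ _ _ muW muW_fin.

Lemma numu : nuE `<< muW.
Proof.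
apply/null_content_dominatesP => A mA muA0.
apply/eqP; rewrite eq_le measure_ge0 andbT -muA0.
by apply: le_measure; rewrite ?inE; [apply: measurableI => //; exact: mWp|exact: mWp|exact: subIsetr].
Qed.

Lemma rn_version : exists g : TW -> R, [/\ measurable_fun setT g,
  (forall w, 0 <= g w <= 1)%R,
  (forall D, measurable D ->
     \int[P]_(om in W @^-1` D) (g (W om))%:E = P (E `&` W @^-1` D)) &
  (forall D (k : TW -> R), measurable D -> measurable_fun setT k ->
     (forall w, 0 <= k w)%R ->
     \int[P]_(om in W @^-1` D) (g (W om) * k (W om))%:E =
     \int[P]_(om in E `&` W @^-1` D) (k (W om))%:E)].
Proof.
pose f := Radon_Nikodym_SigmaFinite.f nuE muW.
have f0 : forall x, 0 <= f x := Radon_Nikodym_SigmaFinite.f_ge0 numu.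
have ffin : forall x, f x \is a fin_num := Radon_Nikodym_SigmaFinite.f_fin_num numu.
have fint : muW.-integrable setT f := Radon_Nikodym_SigmaFinite.f_integrable numu.
have fE : forall A, measurable A -> nuE A = \int[muW]_(x in A) f x :=
  Radon_Nikodym_SigmaFinite.f_integral numu.
have mf : measurable_fun setT f := measurable_int _ fint.
pose S := f @^-1` `]1%:E, +oo[%classic.
have mS : measurable S by rewrite -[S]setTI; apply: mf => //; exact: emeasurable_itv.
have muS0 : muW S = 0.
  have h1 : \int[muW]_(x in S) (f x - 1) = nuE S - muW S.
    rewrite integralB //; last 2 first.
      exact: integrableS fint.
      apply/integrableP; split => //; under eq_integral do rewrite abse1; rewrite integral_cst // mul1e (le_lt_trans (probability_le1 _ _)) ?ltry //; exact: mWp.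
    by rewrite fE // integral_cst // mul1e.
  have mf1 : measurable_fun S (fun x => f x - 1).
    by apply: emeasurable_funB => //; exact: measurable_funTS.
  have h2 : \int[muW]_(x in S) `|f x - 1| = 0.
    rewrite (eq_integral (fun x => f x - 1)); last first.
      move=> x; rewrite inE => xS.
      have h : 1 <= f x by move: xS; rewrite /S/= in_itv/= andbT => /ltW.
      by rewrite gee0_abs // sube_ge0.
    apply/eqP; rewrite eq_le; apply/andP; split.
      rewrite h1 sube_le0; apply: le_measure; rewrite ?inE.
      - by apply: measurableI => //; exact: mWp.
      - exact: mWp.
      - exact: subIsetr.
    apply: integral_ge0 => x xS.
    have h : 1 <= f x by move: xS; rewrite /S/= in_itv/= andbT => /ltW.
    by rewrite sube_ge0.
  have := (ae_eq_integral_abs muW mS mf1).1 h2.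
  case => N [mN muN0 subN].
  apply/eqP; rewrite eq_le measure_ge0 andbT -muN0; apply: le_measure; rewrite ?inE //.
  move=> x Sx; apply: subN => /= /(_ Sx) /eqP.
  have : 1 < f x by move: Sx; rewrite /S/= in_itv/= andbT.
  rewrite -(fineK (ffin x)) lte_fin -EFinD eqe => fx /eqP h.
  by move: fx; rewrite -subr_gt0 h ltxx.
pose g := (fine \o f) \min (cst 1%R).
have mg : measurable_fun setT g.
  apply: measurable_minr => //.
  exact: measurableT_comp (fine_measurable measurableT) mf.
have g01 w : (0 <= g w <= 1)%R.
  rewrite /g /= ge_min lexx orbT andbT le_min ler01 andbT.
  by rewrite fine_ge0.
have fg : ae_eq muW setT f (EFin \o g).
  exists S; split => // x /= H; apply: contrapT => nSx; apply: H => _.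
  have : f x <= 1.
    by rewrite leNgt; apply/negP => h; apply: nSx; rewrite /S/= in_itv/= andbT.
  rewrite /g /= -(fineK (ffin x)) lee_fin => h.
  by rewrite min_l.
have P2 : forall D (k : TW -> R), measurable D -> measurable_fun setT k ->
     (forall w, 0 <= k w)%R ->
     \int[P]_(om in W @^-1` D) (g (W om) * k (W om))%:E =
     \int[P]_(om in E `&` W @^-1` D) (k (W om))%:E.
  move=> D k mD mk k0.
  have mgk : measurable_fun D (fun w => (g w * k w)%:E).
    by apply/measurable_EFinP; apply: measurable_funM; exact: measurable_funTS.
  transitivity (\int[muW]_(w in D) (g w * k w)%:E).
    rewrite (_ : \int[muW]_(w in D) (g w * k w)%:E =
       \int[pushforward P W]_(w in D) (g w * k w)%:E) //.
    rewrite ge0_integral_pushforward //.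
    by move=> w _; rewrite lee_fin mulr_ge0 //; case/andP: (g01 w).
  transitivity (\int[muW]_(w in D) ((k w)%:E * f w)).
    apply: ae_eq_integral => //.
      apply: emeasurable_funM; first exact/measurable_EFinP/measurable_funTS.
      exact: measurable_funTS.
    move: fg; apply: filterS => x /= h Dx.
    by rewrite h // EFinM muleC.
  rewrite Radon_Nikodym_SigmaFinite.change_of_variables //; last 2 first.
    exact: numu.
    exact/measurable_EFinP/measurable_funTS.
  have -> : \int[nuE]_(w in D) (k w)%:E =
      \int[pushforward (mrestr P mE) W]_(w in D) (k w)%:E.
    congr (integral _ _ _); apply/funext => A /=.
    by rewrite /nuE /pushforward /mrestr setIC.
  rewrite ge0_integral_pushforward //; last 2 first.
    exact/measurable_EFinP/measurable_funTS.
    by move=> x _; rewrite lee_fin.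
  rewrite int_restr //; last 3 first.
    by move=> x; rewrite lee_fin.
    exact: mWp.
    apply/measurable_EFinP; apply: measurableT_comp => //; exact: measurable_funTS.
  by rewrite setIC.
exists g; split => //.
move=> D mD.
transitivity (\int[P]_(om in W @^-1` D) (g (W om) * cst 1%R (W om))%:E).
  by apply: eq_integral => x _; rewrite mulr1.
rewrite P2 //.
by rewrite (_ : (fun om => _) = cst 1%:E) // integral_cst ?mul1e //; apply: measurableI => //; exact: mWp.
Qed.

End rnv.


Lemma mcoltup (R : realType) (n m : nat) (M : 'M[R]_(m, n)) :
  measurable_fun setT (fun x : n.-tuple R => coltup (M *m tcol x)).
Proof.
apply/measurable_fun_tnthP => i.
rewrite (_ : _ \o _ = fun x => \sum_(j < n) M i j * tnth x j); last first.
  apply/funext => x; rewrite /= /coltup tnth_mktuple !mxE.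
  by apply: eq_bigr => j _; rewrite mxE.
apply: measurable_sum => j; apply: measurable_funM => //.
exact: measurable_tnth.
Qed.

Definition idx (y : bool) : 'I_2 := if y then ord_max else ord0.

Lemma Bentry (R : realType) (n : nat) (b0 b1 : 'cV[R]_n) (c : 'cV[R]_n) y :
  ((row_mx b0 b1)^T *m c) (idx y) 0 = ((if y then b1 else b0)^T *m c) 0 0.
Proof.
rewrite tr_row_mx mul_col_mx.
case: y => /=.
  have -> : (ord_max : 'I_2) = rshift 1 (ord0 : 'I_1) by apply: val_inj.
  by rewrite col_mxEd.
have -> : (ord0 : 'I_2) = lshift 1 (ord0 : 'I_1) by apply: val_inj.
by rewrite col_mxEu.
Qed.

Section model.
Variables (R : realType) (d : nat)
  (lam : {measure set (d.-tuple R) -> \bar R})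
  (dO : measure_display) (Om : measurableType dO) (P : probability Om R)
  (X : Om -> d.-tuple R) (Y Rr : Om -> bool)
  (mX : measurable_fun setT X) (mY : measurable_fun setT Y)
  (mR : measurable_fun setT Rr).
Hypothesis hpos : forall y r, (0 < P (Y @^-1` [set y] `&` Rr @^-1` [set r]))%E.
Variables (p : bool -> bool -> d.-tuple R -> R).
Hypothesis mp : forall y r, measurable_fun setT (p y r).
Hypothesis ppos : forall y r x, 0 < p y r x.
Hypothesis hdens : forall y r (A : set (d.-tuple R)), measurable A ->
     P (X @^-1` A `&` (Y @^-1` [set y] `&` Rr @^-1` [set r])) =
     (P (Y @^-1` [set y] `&` Rr @^-1` [set r]) * \int[lam]_(x in A) (p y r x)%:E)%E.
Variables (alpha : bool -> R) (beta : bool -> 'cV[R]_d).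
Hypothesis htilt : forall x y,
     p y false x * condP P (Y @^-1` [set y]) (Rr @^-1` [set false]) =
     expR (alpha y + ((beta y)^T *m tcol x) 0 0) *
       p y true x * condP P (Y @^-1` [set y]) (Rr @^-1` [set true]).

Local Notation Ey y := (Y @^-1` [set y]).
Local Notation Er r := (Rr @^-1` [set r]).
Definition pi y r := (fine (P (Y @^-1` [set y] `&` Rr @^-1` [set r]))).
Definition piR r := (fine (P (Rr @^-1` [set r]))).

Definition Bm := row_mx (beta false) (beta true).
Definition Uf (x : d.-tuple R) : 2.-tuple R := coltup (Bm^T *m tcol x).
Definition W (om : Om) := (Y om, Uf (X om)).

Lemma mEy y : measurable (Ey y).
Proof. by rewrite -[_ @^-1` _]setTI; exact: mY. Qed.
Lemma mEr r : measurable (Er r).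
Proof. by rewrite -[_ @^-1` _]setTI; exact: mR. Qed.
Lemma mXp A : measurable A -> measurable (X @^-1` A).
Proof. by move=> mA; rewrite -[_ @^-1` _]setTI; exact: mX. Qed.
Lemma mUf : measurable_fun setT Uf.
Proof. exact: mcoltup. Qed.
Lemma mW : measurable_fun setT W.
Proof.
apply: measurable_fun_pair => //.
exact: measurableT_comp mUf mX.
Qed.

Lemma pi_gt0 y r : 0 < pi y r.
Proof.
apply: fine_gt0; rewrite hpos /=.
by rewrite (le_lt_trans (probability_le1 _ _)) ?ltry//; apply: measurableI; [exact: mEy|exact: mEr].
Qed.

Lemma piE y r : P (Ey y `&` Er r) = (pi y r)%:E.
Proof.
rewrite fineK // ge0_fin_numE ?measure_ge0//.
by rewrite (le_lt_trans (probability_le1 _ _)) ?ltry//; apply: measurableI; [exact: mEy|exact: mEr].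
Qed.

Lemma piR_gt0 r : 0 < piR r.
Proof.
apply: fine_gt0; rewrite (lt_le_trans (hpos true r)) /=.
  by rewrite (le_lt_trans (probability_le1 _ _)) ?ltry//; exact: mEr.
by apply: le_measure; rewrite ?inE; [apply: measurableI; [exact: mEy|exact: mEr]|exact: mEr|exact: subIsetr].
Qed.

Definition cst0 := piR false / piR true.
Definition hh (y : bool) (t : R) : R := (1 + expR (alpha y + t) * cst0)^-1.
Definition h (w : bool * 2.-tuple R) : R := hh w.1 (tnth w.2 (idx w.1)).
Definition hr (r : bool) (w : bool * 2.-tuple R) : R := if r then h w else 1 - h w.

Lemma cst0_gt0 : 0 < cst0.
Proof. by rewrite /cst0 divr_gt0 // piR_gt0. Qed.

Lemma hh01 y t : 0 < hh y t < 1.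
Proof.
have e0 : 0 < expR (alpha y + t) * cst0 by rewrite mulr_gt0 ?expR_gt0 ?cst0_gt0.
rewrite /hh invr_gt0 invf_lt1; lra.
Qed.

Lemma hr01 r w : 0 <= hr r w <= 1.
Proof.
rewrite /hr /h; case: r; have := hh01 w.1 (tnth w.2 (idx w.1)); lra.
Qed.

Lemma mhh y : measurable_fun setT (hh y).
Proof.
apply: nonincreasing_measurable => // s t st.
rewrite /hh lef_pV2 ?posrE; last 2 first.
  by rewrite addr_gt0 // mulr_gt0 ?expR_gt0 ?cst0_gt0.
  by rewrite addr_gt0 // mulr_gt0 ?expR_gt0 ?cst0_gt0.
by rewrite lerD2l ler_pM2r ?cst0_gt0 // ler_expR lerD2l.
Qed.

Lemma mh : measurable_fun setT h.
Proof.
rewrite (_ : h = fun w => if w.1 then hh true (tnth w.2 (idx true))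
                          else hh false (tnth w.2 (idx false))); last first.
  by apply/funext => -[[]].
apply: measurable_fun_ifT => //.
- apply: measurableT_comp (mhh true) _.
  exact: measurableT_comp (measurable_tnth _) measurable_snd.
- apply: measurableT_comp (mhh false) _.
  exact: measurableT_comp (measurable_tnth _) measurable_snd.
Qed.

Lemma mhr r : measurable_fun setT (hr r).
Proof.
case: r; first exact: mh.
by apply: measurable_funB => //; exact: mh.
Qed.

Lemma ident_gen (a0 a1 p0 p1 E r0 r1 : R) : r0 != 0 -> r1 != 0 ->
  0 < E * (r0 / r1) -> p0 * (a0 / r0) = E * p1 * (a1 / r1) ->
  (1 + E * (r0 / r1))^-1 * (a0 * p0 + a1 * p1) = a1 * p1 /\
  (1 - (1 + E * (r0 / r1))^-1) * (a0 * p0 + a1 * p1) = a0 * p0.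
Proof.
move=> r00 r10 Ec H.
have H' : a0 * p0 = E * (r0 / r1) * (a1 * p1).
  have -> : a0 * p0 = p0 * (a0 / r0) * r0 by field.
  by rewrite H; field.
have ne : 1 + E * (r0 / r1) != 0 by rewrite gt_eqF // addr_gt0.
have ne2 : r1 + E * r0 != 0.
  have -> : r1 + E * r0 = r1 * (1 + E * (r0 / r1)) by field.
  by rewrite mulf_neq0.
by rewrite H'; split; field; rewrite r10 ne2.
Qed.

Lemma ident r y x : hr r (y, Uf x) * (pi y false * p y false x + pi y true * p y true x)
  = pi y r * p y r x.
Proof.
have H := htilt x y; rewrite /condP in H.
have e : ((beta y)^T *m tcol x) 0 0 = tnth (Uf x) (idx y).
  by rewrite /Uf /coltup tnth_mktuple Bentry; case: y {H}.
rewrite e in H.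
have := @ident_gen (pi y false) (pi y true) (p y false x) (p y true x)
  (expR (alpha y + tnth (Uf x) (idx y))) (piR false) (piR true).
case.
- by rewrite gt_eqF // piR_gt0.
- by rewrite gt_eqF // piR_gt0.
- by rewrite mulr_gt0 ?expR_gt0 // divr_gt0 // piR_gt0.
- exact: H.
by rewrite /hr /h /hh /cst0 /=; case: r.
Qed.

Section K1sec.
Variable y : bool.

Definition nuy (D : set (d.-tuple R)) : \bar R := P (X @^-1` D `&` Ey y).

Let nuy0 : nuy set0 = 0%E.
Proof. by rewrite /nuy preimage_set0 set0I measure0. Qed.

Let nuy_ge0 A : (0 <= nuy A)%E.
Proof. exact: measure_ge0. Qed.

Let nuy_sa : semi_sigma_additive nuy.
Proof.
move=> F mF tF mUF; rewrite /nuy preimage_bigcup setI_bigcupl.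
apply: measure_semi_sigma_additive.
- by move=> n; apply: measurableI; [exact: mXp|exact: mEy].
- apply/trivIsetP => /= i j _ _ ij; rewrite setIACA setIid -preimage_setI.
  by move/trivIsetP : tF => /(_ _ _ _ _ ij) ->//; rewrite preimage_set0 set0I.
- rewrite -setI_bigcupl -preimage_bigcup; apply: measurableI; [exact: mXp|exact: mEy].
Qed.

HB.instance Definition _ := isMeasure.Build _ _ _ nuy nuy0 nuy_ge0 nuy_sa.

Definition qy (x : d.-tuple R) : R := pi y false * p y false x + pi y true * p y true x.

Lemma mqy : measurable_fun setT qy.
Proof.
apply: measurable_funD; apply: measurable_funM => //.
Qed.

Lemma qy0 x : 0 <= qy x.
Proof.
by rewrite /qy addr_ge0 // mulr_ge0 // ?ltW ?pi_gt0 ?ppos.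
Qed.

Lemma nuyq A : measurable A -> nuy A = (\int[lam]_(x in A) (qy x)%:E)%E.
Proof.
move=> mA.
have -> : nuy A = (P (X @^-1` A `&` (Ey y `&` Er false)) +
                   P (X @^-1` A `&` (Ey y `&` Er true)))%E.
  rewrite -measureU; last first.
  - apply/seteqP; split => om //= [[_ [_ h0]] [_ [_ h1]]].
    by move: h0 h1 => /= -> .
  - by apply: measurableI; [exact: mXp|apply: measurableI; [exact: mEy|exact: mEr]].
  - by apply: measurableI; [exact: mXp|apply: measurableI; [exact: mEy|exact: mEr]].
  rewrite /nuy -setIUr -setIUr (_ : Er false `|` Er true = setT) ?setIT //.
  apply/seteqP; split => om //= _.
  by case: (Rr om); [right|left].
rewrite !hdens // !piE /qy.
rewrite [RHS](eq_integral (fun x => (pi y false * p y false x)%:E + (pi y true * p y true x)%:E)%E); last first.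
  by move=> x _; rewrite EFinD.
rewrite ge0_integralD //; last 4 first.
- by move=> x _; rewrite lee_fin mulr_ge0 // ?ltW ?pi_gt0 ?ppos.
- by apply/measurable_EFinP; apply: measurable_funM => //; exact: measurable_funTS.
- by move=> x _; rewrite lee_fin mulr_ge0 // ?ltW ?pi_gt0 ?ppos.
- by apply/measurable_EFinP; apply: measurable_funM => //; exact: measurable_funTS.
have I r' : (\int[lam]_(x in A) (pi y r' * p y r' x)%:E =
    (pi y r')%:E * \int[lam]_(x in A) (p y r' x)%:E)%E.
  under eq_integral do rewrite EFinM.
  rewrite ge0_integralZl //.
  - by apply/measurable_EFinP; exact: measurable_funTS.
  - by move=> x _; rewrite lee_fin ltW ?ppos.
  - by rewrite lee_fin ltW ?pi_gt0.
by rewrite !I.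
Qed.

Lemma K1 r A : measurable A ->
  (\int[P]_(om in X @^-1` A `&` Ey y) (hr r (y, Uf (X om)))%:E =
   P (X @^-1` A `&` (Ey y `&` Er r)))%E.
Proof.
move=> mA.
have mk : measurable_fun setT (fun x => hr r (y, Uf x)).
  apply: measurableT_comp (mhr r) _.
  exact: measurable_fun_pair mUf.
rewrite -(@int_restr _ _ _ P _ (mEy y)) //; last 3 first.
- by move=> om; rewrite lee_fin; case/andP: (hr01 r (y, Uf (X om))).
- exact: mXp.
- apply/measurable_EFinP; apply: measurable_funTS.
  exact: measurableT_comp mk mX.
transitivity (\int[nuy]_(x in A) (hr r (y, Uf x))%:E)%E.
  rewrite (_ : \int[nuy]_(x in A) (hr r (y, Uf x))%:E =
     \int[pushforward (mrestr P (mEy y)) X]_(x in A) (hr r (y, Uf x))%:E)%E //.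
  rewrite ge0_integral_pushforward //.
  - by apply/measurable_EFinP; exact: measurable_funTS.
  - by move=> x _; rewrite lee_fin; case/andP: (hr01 r (y, Uf x)).
rewrite (@dens_int _ _ _ lam nuy qy mqy qy0 nuyq) //; last 2 first.
- by move=> x; rewrite lee_fin; case/andP: (hr01 r (y, Uf x)).
- by apply/measurable_EFinP; exact: measurable_funTS.
rewrite (eq_integral (fun x => ((pi y r)%:E * (p y r x)%:E)%E)); last first.
  by move=> x _; rewrite -EFinM /qy ident EFinM.
rewrite ge0_integralZl //.
- by rewrite hdens // piE.
- by apply/measurable_EFinP; exact: measurable_funTS.
- by move=> x _; rewrite lee_fin ltW ?ppos.
- by rewrite lee_fin ltW ?pi_gt0.
Qed.

End K1sec.

Lemma mWpm D : measurable D -> measurable (W @^-1` D).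
Proof. by move=> mD; rewrite -[_ @^-1` _]setTI; exact: mW. Qed.

Lemma K2 r A D : measurable A -> measurable D ->
  (\int[P]_(om in X @^-1` A `&` W @^-1` D) (hr r (W om))%:E =
   P (X @^-1` A `&` W @^-1` D `&` Er r))%E.
Proof.
move=> mA mD.
set G := X @^-1` A `&` W @^-1` D.
have mG : measurable G by apply: measurableI; [exact: mXp|exact: mWpm].
pose Ay y := A `&` (fun x => (y, Uf x)) @^-1` D.
have mAy y : measurable (Ay y).
  apply: measurableI => //; rewrite -[_ @^-1` _]setTI.
  by apply: (measurable_fun_pair _ mUf) => //.
have GE y : G `&` Ey y = X @^-1` (Ay y) `&` Ey y.
  apply/seteqP; split => om /=.
  - by move=> [[xa]]; rewrite /W => + <-.
  - by move=> [[xa dy] Yy]; split => //; split => //=; rewrite /W /= Yy.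
have ZK y : (\int[P]_(om in G `&` Ey y) (hr r (W om))%:E = P (G `&` Ey y `&` Er r))%E.
  rewrite GE -setIA -K1 //.
  apply: eq_integral => om; rewrite inE => -[_ /= Yy].
  by rewrite /W Yy.
have GU : G = (G `&` Ey true) `|` (G `&` Ey false).
  rewrite -setIUr (_ : Ey true `|` Ey false = setT) ?setIT //.
  by apply/seteqP; split => om //= _; case: (Y om); [left|right].
have mGy y : measurable (G `&` Ey y) by apply: measurableI => //; exact: mEy.
rewrite [in LHS]GU ge0_integral_setU //; last 3 first.
- apply/measurable_EFinP; apply: measurable_funTS.
  exact: measurableT_comp (mhr r) mW.
- by move=> om _; rewrite lee_fin; case/andP: (hr01 r (W om)).
  apply/disj_setPS => om [[_ /= Ht] [_ /=]].
  by rewrite Ht.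
rewrite !ZK -measureU; last 3 first.
- by apply: measurableI => //; exact: mEr.
- by apply: measurableI => //; exact: mEr.
- apply/seteqP; split => om //= [[[_ ->]] _] [[_]].
  by [].
by rewrite -setIUl -GU.
Qed.

Definition hB (B : set bool) (w : bool * 2.-tuple R) : R :=
  (if `[< B true >] then hr true w else 0) + (if `[< B false >] then hr false w else 0).

Lemma mhB B : measurable_fun setT (hB B).
Proof.
rewrite /hB; case: (asboolP (B true)) => _; case: (asboolP (B false)) => _;
  apply: measurable_funD => //; exact: mhr.
Qed.

Lemma hB01 B w : 0 <= hB B w <= 1.
Proof.
have := hr01 true w; have := hr01 false w.
rewrite /hB /hr; case: (asboolP (B true)) => _; case: (asboolP (B false)) => _; lra.
Qed.

Lemma K3 B A D : measurable A -> measurable D ->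
  (\int[P]_(om in X @^-1` A `&` W @^-1` D) (hB B (W om))%:E =
   P (X @^-1` A `&` W @^-1` D `&` Rr @^-1` B))%E.
Proof.
move=> mA mD.
set G := X @^-1` A `&` W @^-1` D.
have mG : measurable G by apply: measurableI; [exact: mXp|exact: mWpm].
have mhrW r : measurable_fun G (fun om => (hr r (W om))%:E).
  apply/measurable_EFinP; apply: measurable_funTS.
  exact: measurableT_comp (mhr r) mW.
have hr0 r om : (0 <= (hr r (W om))%:E)%E by rewrite lee_fin; case/andP: (hr01 r (W om)).
rewrite /hB; case: (asboolP (B true)) => Bt; case: (asboolP (B false)) => Bf.
- under eq_integral do rewrite EFinD.
  rewrite ge0_integralD // !K2 // -measureU; last 3 first.
  + by apply: measurableI => //; exact: mEr.
  + by apply: measurableI => //; exact: mEr.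
  + by apply/seteqP; split => om //= [[_ ->]] [_].
  rewrite -setIUr; congr (P (G `&` _)).
  apply/seteqP; split => om /=.
  + by case => ->.
  + by case: (Rr om) => _; [left|right].
- under eq_integral do rewrite addr0.
  rewrite K2 //; congr (P (G `&` _)).
  apply/seteqP; split => om /=.
  + by move=> ->.
  + by case: (Rr om).
- under eq_integral do rewrite add0r.
  rewrite K2 //; congr (P (G `&` _)).
  apply/seteqP; split => om /=.
  + by move=> ->.
  + by case: (Rr om).
- under eq_integral do rewrite addr0.
  rewrite integral0 (_ : Rr @^-1` B = set0) ?setI0 ?measure0 //.
  apply/seteqP; split => om //=.
  by case: (Rr om).
Qed.

Lemma main_ci (dT : measure_display) (TT : measurableType dT)
  (F : d.-tuple R -> TT) (mF : measurable_fun setT F) :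
  cond_indep P (F \o X) Rr W.
Proof.
move=> A BB mA mB.
have mFA : measurable (F @^-1` A) by rewrite -[_ @^-1` _]setTI; exact: mF.
pose E := X @^-1` (F @^-1` A).
have mE : measurable E by exact: mXp.
have [gA [mgA gA01 gAint gAk]] := @rn_version R _ _ P _ _ W mW E mE.
have hB0 w : 0 <= hB BB w by case/andP: (hB01 BB w).
exists gA, (hB BB), (fun w => gA w * hB BB w); split.
- by split => //; split.
- split; first exact: mhB.
  split; first exact: hB01.
  move=> D mD.
  have := K3 BB setT D measurableT mD.
  by rewrite preimage_setT setTI => ->; rewrite setIC.
- split; first by apply: measurable_funM => //; exact: mhB.
  split.
    move=> w; have := gA01 w; have := hB01 BB w => /andP[? ?] /andP[? ?].
    by rewrite mulr_ge0 //= mulr_ile1.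
  move=> D mD.
  rewrite gAk //; last exact: mhB.
  rewrite K3 //.
  by rewrite setIAC.
- by apply: aeW.
Qed.

End model.

Theorem lemma6 (R : realType) (d : nat)
  (lam : {measure set (d.-tuple R) -> \bar R})
  (hlam : is_lebesgue_measure_Rd lam)
  (dO : measure_display) (Om : measurableType dO) (P : probability Om R)
  (X : Om -> d.-tuple R) (Y Rr : Om -> bool)
  (mX : measurable_fun setT X) (mY : measurable_fun setT Y)
  (mR : measurable_fun setT Rr)
  (hpos : forall y r, (0 < P (Y @^-1` [set y] `&` Rr @^-1` [set r]))%E)
  (p : bool -> bool -> d.-tuple R -> R)
  (mp : forall y r, measurable_fun setT (p y r))
  (ppos : forall y r x, 0 < p y r x)
  (hdens : forall y r (A : set (d.-tuple R)), measurable A ->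
     P (X @^-1` A `&` (Y @^-1` [set y] `&` Rr @^-1` [set r])) =
     (P (Y @^-1` [set y] `&` Rr @^-1` [set r]) * \int[lam]_(x in A) (p y r x)%:E)%E)
  (alpha : bool -> R) (beta : bool -> 'cV[R]_d)
  (htilt : forall x y,
     p y false x * condP P (Y @^-1` [set y]) (Rr @^-1` [set false]) =
     expR (alpha y + ((beta y)^T *m tcol x) 0 0) *
       p y true x * condP P (Y @^-1` [set y]) (Rr @^-1` [set true]))
  (PB : 'M[R]_d)
  (hPB : is_orth_proj_colspace PB (row_mx (beta false) (beta true))) :
  let B := row_mx (beta false) (beta true) in
  let U := fun om => coltup (B^T *m tcol (X om)) in
  let V := fun om => coltup ((1%:M - PB) *m tcol (X om)) in
  cond_indep P V Rr (fun om => (Y om, U om)) /\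
  cond_indep P X Rr (fun om => (Y om, U om)).
Proof.
Proof.
move=> B U V; split.
- exact (main_ci R d lam dO Om P X Y Rr mX mY mR hpos p mp ppos hdens alpha beta htilt
    _ _ _ (@mcoltup R d d (1%:M - PB))).
- exact (main_ci R d lam dO Om P X Y Rr mX mY mR hpos p mp ppos hdens alpha beta htilt
    _ _ _ (@measurable_id _ (d.-tuple R) setT)).
Qed.
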